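(* Let $Y$ be a weakly uniformly convex geodesic space satisfying: for every $a\in Y$ and every $\varepsilon>0$ there exists $s>0$ such that $\inf_{r\ge s}\delta_Y(a,r,\varepsilon)>0$. Then $Y$ has property (C) with $\Psi(y,r,\varepsilon)=\delta_Y(y,r,\varepsilon)$ for all $y\in Y$, $r>0$, $\varepsilon\in(0,2]$; that is: (C1) for all $y\in Y$, $r>0$, $\varepsilon\in(0,2]$ and all $x,z\in Y$ with $d(x,y)=r$ and $d(y,z)\ge r$, if $w$ lies on a geodesic segment from $y$ to $z$ with $d(y,w)=r$, then $r+d(x,z)\le d(y,z)+\delta_Y(y,r,\varepsilon)r$ implies $d(w,x)\le\varepsilon r$; (C2) for all $y\in Y$ and $\varepsilon\in(0,2]$ there exists $s>0$ such that $\inf_{r\ge s}\delta_Y(y,r,\varepsilon)>0$.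
   Context: A geodesic space is a metric space in which any two points are joined by a geodesic path (a distance-preserving map from an interval $[0,l]$); its image is a geodesic segment. The modulus of convexity of $Y$ is \[\delta_Y(a,r,\varepsilon)=\inf\{1-d(a,m(x,y))/r : d(a,x)\le r,\ d(a,y)\le r,\ d(x,y)\ge\varepsilon r\}\] for $a\in Y$, $r>0$, $\varepsilon\in(0,2]$, where $m(x,y)$ ranges over midpoints of geodesic segments from $x$ to $y$; $Y$ is weakly uniformly convex if $\delta_Y(a,r,\varepsilon)>0$ for all such $a,r,\varepsilon$. *)

(* Defs.v *)
(* reals are an abstract R : realType,
   the modulus of convexity is extended-real valued (inf of empty set = +oo). *)
From HB Require Import structures.
From mathcomp Require Import all_boot all_order all_algebra.
From mathcomp Require Import all_classical all_reals.
From mathcomp Require Import ereal.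
Set Implicit Arguments. Unset Strict Implicit. Unset Printing Implicit Defensive.
Import Order.TTheory GRing.Theory Num.Theory.
Local Open Scope ring_scope.
Local Open Scope classical_set_scope.

Section GeodesicDefs.
Variables (R : realType) (Y : Type) (d : Y -> Y -> R).

Definition is_metric : Prop :=
  (forall x y, 0 <= d x y) /\
  (forall x y, d x y = 0 <-> x = y) /\
  (forall x y, d x y = d y x) /\
  (forall x y z, d x z <= d x y + d y z).

Definition geodesic_path (gamma : R -> Y) (l : R) (x y : Y) : Prop :=
  0 <= l /\ gamma 0 = x /\ gamma l = y /\
  (forall s t, 0 <= s <= l -> 0 <= t <= l -> d (gamma s) (gamma t) = `|s - t|).

Definition geodesic_space : Prop :=
  forall x y, exists gamma l, geodesic_path gamma l x y.

Definition on_geodesic_segment (x y w : Y) : Prop :=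
  exists gamma l, geodesic_path gamma l x y /\
    exists t, 0 <= t <= l /\ w = gamma t.

Definition is_midpoint (x y m : Y) : Prop :=
  exists gamma l, geodesic_path gamma l x y /\ m = gamma (l / 2).

Definition modulus_convexity (a : Y) (r eps : R) : \bar R :=
  ereal_inf [set v : \bar R | exists x y m,
      [/\ d a x <= r, d a y <= r, eps * r <= d x y, is_midpoint x y m
        & v = ((1 - d a m / r)%:E)]].

Definition weakly_uniformly_convex : Prop :=
  forall a r eps, 0 < r -> 0 < eps <= 2 ->
    (0 < modulus_convexity a r eps)%E.

End GeodesicDefs.

(* Main.v *)
Require Import Defs.
From HB Require Import structures.
From mathcomp Require Import all_boot all_order all_algebra.
From mathcomp Require Import all_classical all_reals.
From mathcomp Require Import ereal.
From mathcomp Require Import lra.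
Import Order.TTheory GRing.Theory Num.Theory.
Local Open Scope ring_scope.
Local Open Scope classical_set_scope.

Lemma mod_le (R : realType) (Y : Type) (d : Y -> Y -> R) a r eps p q m :
  d a p <= r -> d a q <= r -> eps * r <= d p q -> is_midpoint d p q m ->
  (modulus_convexity d a r eps <= (1 - d a m / r)%:E)%E.
Proof.
move=> h1 h2 h3 h4; apply: ereal_inf_lbound; by exists p, q, m; split.
Qed.

Lemma pos_le (R : realType) (e : \bar R) (v : R) :
  (0 < e)%E -> (e <= v%:E)%E -> exists er, e = er%:E /\ 0 < er /\ er <= v.
Proof.
case: e => [er| |] //= h1 h2; exists er; split => //; split; by rewrite -?lte_fin -?lee_fin.
Qed.

Theorem lemma2p1 (R : realType) (Y : Type) (d : Y -> Y -> R)
  (hmet : is_metric d) (hgeo : geodesic_space d)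
  (hwuc : weakly_uniformly_convex d)
  (hinf : forall (a : Y) (eps : R), 0 < eps -> exists s : R, 0 < s /\
     (0 < ereal_inf [set modulus_convexity d a r eps | r in [set r : R | (s <= r)%R]])%E) :
  (* (C1) *)
  (forall (y : Y) (r eps : R), 0 < r -> 0 < eps <= 2 ->
    forall x z w : Y, d x y = r -> r <= d y z ->
      on_geodesic_segment d y z w -> d y w = r ->
      ((r + d x z)%:E <= (d y z)%:E + modulus_convexity d y r eps * r%:E)%E ->
      d w x <= eps * r) /\
  (* (C2) *)
  (forall (y : Y) (eps : R), 0 < eps <= 2 -> exists s : R, 0 < s /\
     (0 < ereal_inf [set modulus_convexity d y r eps | r in [set r : R | (s <= r)%R]])%E).
Proof.
have [d0 [dE [dC dT]]] := hmet.
split; last first.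
  by move=> y eps /andP[e0 _]; exact: hinf.
move=> y r eps r0 eps02 x z w dxy ryz [g [l [[l0 [g0 [gl gd]]] [t [t0l wt]]]]] dyw hyp.
have eps0 : 0 < eps by case/andP: eps02.
rewrite leNgt; apply/negP => hwx.
have hwx0 : 0 < d w x by apply: lt_trans hwx; rewrite mulr_gt0.
have dyz : d y z = l by rewrite -g0 -gl gd //; [rewrite sub0r normrN ger0_norm|rewrite lexx l0|rewrite l0 lexx].
have dywt : d y w = t.
  by rewrite wt -g0 gd //; [rewrite sub0r normrN ger0_norm //; case/andP: t0l|rewrite lexx l0].
have dwz : d w z = l - t.
  rewrite wt -gl gd //; last by rewrite l0 lexx.
  by rewrite distrC ger0_norm // subr_ge0; case/andP: t0l.
have [g2 [l2 hg2]] := hgeo w x.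
set m := g2 (l2 / 2).
have hm : is_midpoint d w x m by exists g2, l2.
have dyx : d y x <= r by rewrite dC dxy.
have dywle : d y w <= r by rewrite dyw.
have h1 := @mod_le R Y d y r eps w x m dywle dyx (ltW hwx) hm.
have hw0 : (0 < modulus_convexity d y r eps)%E by apply: hwuc.
have [dr [dE1 [dr0 drle]]] := @pos_le R _ _ hw0 h1.
rewrite dE1 -EFinM -EFinD lee_fin in hyp.
set rho := l - t + dr * r.
have rho0 : 0 < rho.
  rewrite /rho; apply: ltr_pwDr; first by rewrite mulr_gt0.
  by rewrite subr_ge0; case/andP: t0l.
set e2 := Num.min (d w x / rho) 2.
have e20 : 0 < e2 <= 2.
  rewrite /e2 lt_min ge_min lexx orbT andbT divr_gt0 //=.
have h2 := @mod_le R Y d z rho e2 w x m _ _ _ hm.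
have tr : t = r by rewrite -dywt.
have hzw : d z w <= rho.
  rewrite dC dwz /rho lerDl; exact: ltW (mulr_gt0 dr0 r0).
have hzx : d z x <= rho by rewrite dC /rho -tr; move: hyp; rewrite dyz tr; lra.
have he : e2 * rho <= d w x.
  have : e2 <= d w x / rho by rewrite /e2 ge_min lexx.
  by rewrite ler_pdivlMr.
have h3 := h2 hzw hzx he.
have hz0 : (0%R < modulus_convexity d z rho e2)%E by apply: hwuc.
have [dz [_ [dz0 dzle]]] := @pos_le R _ _ hz0 h3.
have hzm : d z m < rho.
  have : 0 < 1 - d z m / rho by apply: lt_le_trans dzle.
  by rewrite subr_gt0 ltr_pdivrMr // mul1r.
have hym : dr * r <= r - d y m.
  move: drle; rewrite -(ler_pM2r r0) mulrBl mul1r mulfVK //; exact: lt0r_neq0.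
have tri := dT y m z.
move: tri hzm hym; rewrite dyz (dC m z) /rho tr; lra.
Qed.
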